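(* Let $n\ge 1$ and let $f:\{0,1\}^n\to\{0,1\}^n$ be such that: (1) $G(f)$ has no circuit of length at least two; (2) every vertex of $G(f)$ with a positive loop also has a negative loop; (3) every vertex of $G(f)$ is reachable in $G(f)$ from a vertex with a negative loop. Then the asynchronous iteration graph $\Gamma(f)$ is strongly connected.
   Context: For $x\in\{0,1\}^n$ and $j\in\{1,\dots,n\}$, $\overline{x}^j$ denotes $x$ with its $j$-th component switched. The discrete Jacobian entries of $f=(f_1,\dots,f_n)$ are $f_{ij}(x)=\frac{f_i(\overline{x}^j)-f_i(x)}{\overline{x}^j_j-x_j}\in\{-1,0,1\}$. The interaction graph $G(f)$ is the signed directed graph on vertex set $\{1,\dots,n\}$ with an arc $(j,s,i)$ from $j$ to $i$ of sign $s\in\{-1,1\}$ whenever $f_{ij}(x)=s$ for some $x\in\{0,1\}^n$ (arcs of both signs between the same pair are allowed). A path is a sequence of arcs $(i_1,s_1,i_2),(i_2,s_2,i_3),\dots,(i_r,s_r,i_{r+1})$, of length $r$; $i_{r+1}$ is then reachable from $i_1$. It is a circuit if $i_{r+1}=i_1$ and $i_1,\dots,i_r$ are pairwise distinct. A vertex has a positive (resp. negative) loop if there is a positive (resp. negative) arc from it to itself. With $F_f(i,x)=(x_1,\dots,x_{i-1},f_i(x),x_{i+1},\dots,x_n)$, the asynchronous iteration graph $\Gamma(f)$ has vertex set $\{0,1\}^n$ and an arc from $x$ to $F_f(i,x)$ for every $x$ and every $i\in\{1,\dots,n\}$. *)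

(* Defs.v *)
From mathcomp Require Import all_boot all_order all_algebra.
Set Implicit Arguments. Unset Strict Implicit. Unset Printing Implicit Defensive.
Import Order.TTheory GRing.Theory Num.Theory.
Local Open Scope ring_scope.

Definition config (n : nat) := {ffun 'I_n -> bool}.
Definition bnet (n : nat) := config n -> config n.

Definition flip n (x : config n) (j : 'I_n) : config n :=
  [ffun k => if k == j then ~~ x k else x k].

Definition b2z (b : bool) : int := (b : nat)%:Z.

(* discrete Jacobian entry f_ij(x) = (f_i(flip x j) - f_i(x)) / ((flip x j)_j - x_j)
   (the denominator is +-1, so division = multiplication) *)
Definition jac n (f : bnet n) (i j : 'I_n) (x : config n) : int :=
  (b2z (f (flip x j) i) - b2z (f x i)) * (b2z (flip x j j) - b2z (x j)).

Definition arc n (f : bnet n) (j : 'I_n) (s : int) (i : 'I_n) : Prop :=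
  (s = 1 \/ s = -1) /\ exists x : config n, jac f i j x = s.

Definition arcb n (f : bnet n) : rel 'I_n :=
  fun j i => [exists x : config n, jac f i j x != 0].

Definition has_circuit_of_length n (f : bnet n) (r : nat) : Prop :=
  exists c : nat -> 'I_n,
    (forall k l : nat, (k < r)%N -> (l < r)%N -> c k = c l -> k = l) /\
    (forall k : nat, (k < r)%N -> exists s, arc f (c k) s (c (k.+1 %% r)%N)).

Definition positive_loop n (f : bnet n) (i : 'I_n) := arc f i 1 i.
Definition negative_loop n (f : bnet n) (i : 'I_n) := arc f i (-1) i.

Definition reachable n (f : bnet n) (j i : 'I_n) : Prop := connect (arcb f) j i.

Definition Fupd n (f : bnet n) (i : 'I_n) (x : config n) : config n :=
  [ffun k => if k == i then f x i else x k].

Definition async_edge n (f : bnet n) : rel (config n) :=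
  fun x y => [exists i : 'I_n, y == Fupd f i x].

Definition strongly_connected (T : finType) (e : rel T) : Prop :=
  forall x y : T, connect e x y.

(* Main.v *)
Require Import Defs.
From mathcomp Require Import all_boot all_order all_algebra.
From mathcomp Require Import zify.
Set Implicit Arguments. Unset Strict Implicit. Unset Printing Implicit Defensive.

Import GRing.Theory Num.Theory.

Lemma jac_cases n (f : bnet n) i j x :
  jac f i j x = 0%R \/ jac f i j x = 1%R \/ jac f i j x = (-1)%R.
Proof.
rewrite /jac /b2z ffunE eqxx.
case: (f (flip x j) i); case: (f x i); case: (x j); by [left|right;left|right;right].
Qed.

Lemma arcb_arc n (f : bnet n) u w : arcb f u w -> exists s, Defs.arc f u s w.
Proof.
move=> /existsP [x Hx]; exists (jac f w u x); split; last by exists x.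
by case: (jac_cases f w u x) => [H|[H|H]]; [rewrite H eqxx in Hx| left | right].
Qed.

Lemma arc_arcb n (f : bnet n) u s w : Defs.arc f u s w -> arcb f u w.
Proof.
move=> [Hs [x Hx]]; apply/existsP; exists x; rewrite Hx.
by case: Hs => ->.
Qed.

Lemma flip_noarc n (f : bnet n) u v w : ~~ arcb f u v -> f (flip w u) v = f w v.
Proof.
move=> /existsPn /(_ w) /negPn /eqP.
rewrite /jac /b2z ffunE eqxx.
case: (f (flip w u) v); case: (f w v); case: (w u) => //.
Qed.

Lemma dep n (f : bnet n) v : forall m (w w' : config n),
  (#|[set u | w u != w' u]| <= m)%N -> (forall u, arcb f u v -> w u = w' u) ->
  f w v = f w' v.
Proof.
elim=> [|m IH] w w' Hc Ha.
  have -> // : w = w'.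
  apply/ffunP => u; apply/eqP; apply: contraT => Hu.
  move: Hc; rewrite leqn0 => /eqP/cards0_eq/setP/(_ u).
  by rewrite !inE Hu.
case: (pickP (fun u => w u != w' u)) => [u Hu | Hn]; last first.
  have -> // : w = w'.
  by apply/ffunP => u; apply/eqP; move: (Hn u) => /negbT/negPn.
have Hna : ~~ arcb f u v by apply/negP => /Ha /eqP; rewrite (negbTE Hu).
rewrite -(flip_noarc w Hna); apply: IH.
  have Hs : [set k | flip w u k != w' k] \subset [set u | w u != w' u] :\ u.
    apply/subsetP => k; rewrite !inE /flip ffunE.
    case: (eqVneq k u) => [->|//]; move: Hu; by case: (w u); case: (w' u).
  apply: leq_trans (subset_leq_card Hs) _.
  move: Hc; rewrite (cardsD1 u) inE Hu /=; by [].
move=> k Hk; rewrite /flip ffunE; case: (eqVneq k u) => [Ek|_]; last exact: Ha.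
by rewrite -Ek Hk in Hna.
Qed.

Lemma walk_circuit n (f : bnet n) (g : 'I_n -> 'I_n) (P : pred 'I_n) v0 :
  (forall v, P v -> [/\ P (g v), g v != v & arcb f v (g v)]) -> P v0 ->
  exists2 r, (2 <= r)%N & has_circuit_of_length f r.
Proof.
move=> Hg Hv0.
pose c k := iter k g v0.
have Pc : forall k, P (c k) by elim=> //= k IH; case: (Hg _ IH).
have gc : forall k, c k.+1 = g (c k) by [].
have [j [i [lt_ij Eij]]] : exists j i, (i < j)%N /\ c i = c j.
  case: (boolP [exists k1 : 'I_n.+1, [exists k2 : 'I_n.+1,
                 (k1 < k2)%N && (c k1 == c k2)]]).
    move=> /existsP [k1 /existsP [k2 /andP [lt E]]]; exists k2, k1; split => //.
    exact/eqP.
  move=> /existsPn H; exfalso.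
  have inj : injective (fun k : 'I_n.+1 => c k).
    move=> k1 k2 /= E; case: (ltngtP k1 k2) => [lt|lt|/val_inj //].
      by move: (H k1) => /existsPn /(_ k2); rewrite lt E eqxx.
    by move: (H k2) => /existsPn /(_ k1); rewrite lt E eqxx.
  by have := leq_card _ inj; rewrite !card_ord ltnn.
have Hex : exists j, [exists i : 'I_j, c i == c j].
  by exists j; apply/existsP; exists (Ordinal lt_ij); apply/eqP.
case: (ex_minnP Hex) => J /existsP [[i0 Hi0] /eqP /= Ei] Hmin.
have D : forall a b, (a < J)%N -> (b < J)%N -> c a = c b -> a = b.
  move=> a b Ha Hb E; case: (ltngtP a b) => // lt.
    have : [exists i : 'I_b, c i == c b].
      by apply/existsP; exists (Ordinal lt); rewrite /= E.
    by move=> /Hmin; rewrite leqNgt Hb.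
  have : [exists i : 'I_a, c i == c a].
    by apply/existsP; exists (Ordinal lt); rewrite /= E.
  by move=> /Hmin; rewrite leqNgt Ha.
have Hne : i0.+1 != J.
  apply/eqP => EJ; move: Ei; rewrite -EJ gc => E.
  by case: (Hg _ (Pc i0)) => _; rewrite -E eqxx.
exists (J - i0); first lia.
exists (fun k => c (i0 + k %% (J - i0))); split.
  move=> k l Hk Hl; rewrite !modn_small // => E.
  have := D _ _ _ _ E; lia.
move=> k Hk; rewrite modn_mod (modn_small Hk); apply: arcb_arc.
case: (ltngtP k.+1 (J - i0)) => [lt|gt|eq].
- by rewrite (modn_small lt) addnS gc; case: (Hg _ (Pc (i0 + k))).
- lia.
- rewrite eq modnn addn0 Ei.
  have -> : J = (i0 + k).+1 by lia.
  by rewrite gc; case: (Hg _ (Pc (i0 + k))).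
Qed.

Lemma exists_max n (f : bnet n)
  (Hc : forall r : nat, (2 <= r)%N -> ~ has_circuit_of_length f r)
  (S : {set 'I_n}) v0 : v0 \in S ->
  exists2 v, v \in S & forall w, w \in S -> w != v -> ~~ arcb f v w.
Proof.
move=> Hv0.
case: (boolP [exists v in S, [forall w in S, (w != v) ==> ~~ arcb f v w]]).
  move=> /existsP [v /andP [Hv /forallP H]]; exists v => // w Hw Hne.
  by move: (H w); rewrite Hw Hne.
move=> /existsPn H; exfalso.
pose g v := odflt v [pick w in S | (w != v) && arcb f v w].
have Hg : forall v, v \in S -> [/\ g v \in S, g v != v & arcb f v (g v)].
  move=> v Hv; rewrite /g; case: pickP => [w /andP [Hw /andP [Hne Ha]] | Hn] //=.
  exfalso; move: (H v); rewrite Hv /= => /negP; apply.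
  apply/forallP => w; apply/implyP => Hw; apply/implyP=> Hne; apply/negP => Ha.
  by move: (Hn w); rewrite Hw Hne Ha.
have [r Hr Hcr] := walk_circuit (P := mem S) Hg Hv0.
exact: Hc Hr Hcr.
Qed.

Lemma dep' n (f : bnet n) v (w w' : config n) :
  (forall u, arcb f u v -> w u = w' u) -> f w v = f w' v.
Proof. exact: (dep (leqnn _)). Qed.

Lemma switch n (f : bnet n)
  (H2 : forall i : 'I_n, positive_loop f i -> negative_loop f i)
  (H3 : forall i : 'I_n, exists j : 'I_n, negative_loop f j /\ reachable f j i)
  v b : exists z : config n, forall w : config n,
    (forall u, arcb f u v -> u != v -> w u = z u) -> w v = b -> f w v = ~~ b.
Proof.
case: (boolP [exists x, jac f v v x == (-1)%R]).
  move=> /existsP [x0 /eqP Hx0].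
  have [H0 H1] : f x0 v = ~~ x0 v /\ f (flip x0 v) v = x0 v.
    move: Hx0; rewrite /jac /b2z ffunE eqxx.
    by case: (f (flip x0 v) v); case: (f x0 v); case: (x0 v).
  exists x0 => w Hw Hb.
  pose x1 : config n := [ffun k => if k == v then b else x0 k].
  have -> : f w v = f x1 v.
    apply: dep' => u Hu; rewrite ffunE; case: eqVneq => [->|ne]; first by [].
    exact: Hw.
  case: (eqVneq (x0 v) b) => E.
    have -> : x1 = x0.
      by apply/ffunP => k; rewrite ffunE; case: eqVneq => [->|].
    by rewrite H0 E.
  have -> : x1 = flip x0 v.
    apply/ffunP => k; rewrite !ffunE; case: eqVneq => [->|//].
    by move: E; case: (x0 v); case: (b).
  by rewrite H1; move: E; case: (x0 v); case: (b).
move=> /existsPn Hnn.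
have Hnl : forall j, negative_loop f j -> j != v.
  move=> j [_ [x Hx]]; apply/eqP => E; subst j.
  by move: (Hnn x); rewrite Hx eqxx.
have Hnv : ~~ arcb f v v.
  apply/negP => /arcb_arc [s Hs].
  have : negative_loop f v.
    case: (Hs) => [[E|E] _]; subst s; first exact: H2.
    exact: Hs.
  by move=> /Hnl; rewrite eqxx.
case: (H3 v) => j [Hj Hr].
have Hjv := Hnl _ Hj.
move: Hr; rewrite /reachable => /connectP [p Hp Hl].
have [u [Huv Hu]] : exists u, u != v /\ arcb f u v.
  move: Hp Hl; case/lastP: p => [|p' u'].
    by move=> _ /= E; rewrite E eqxx in Hjv.
  rewrite rcons_path last_rcons => /andP [_ Ha] E; subst u'.
  exists (last j p'); split => //.
  by apply/eqP => E; move: Ha; rewrite E (negbTE Hnv).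
move: Hu => /existsP [x1 Hx1].
have Hd : f (flip x1 u) v != f x1 v.
  apply/negP => /eqP E; move: Hx1; rewrite /jac E GRing.subrr GRing.mul0r eqxx.
  by [].
exists (if f x1 v == ~~ b then x1 else flip x1 u) => w Hw Hb.
have -> : f w v = f (if f x1 v == ~~ b then x1 else flip x1 u) v.
  apply: dep' => u' Hu'; apply: Hw => //.
  by apply/eqP => E; move: Hu'; rewrite E (negbTE Hnv).
case: eqVneq => [/eqP //|ne].
by move: Hd ne; case: (f (flip x1 u) v); case: (f x1 v); case: (b).
Qed.

Lemma main_ind n (f : bnet n)
  (Hc : forall r : nat, (2 <= r)%N -> ~ has_circuit_of_length f r)
  (H2 : forall i : 'I_n, positive_loop f i -> negative_loop f i)
  (H3 : forall i : 'I_n, exists j : 'I_n, negative_loop f j /\ reachable f j i) :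
  forall m (S : {set 'I_n}), (#|S| <= m)%N ->
  (forall u v, arcb f u v -> v \in S -> u \in S) ->
  forall x y : config n, (forall k, k \notin S -> x k = y k) ->
  connect (async_edge f) x y.
Proof.
elim=> [|m IH] S Hcard Hd x y Hxy.
  have -> : x = y; last exact: connect0.
  apply/ffunP => k; apply: Hxy.
  by move: Hcard; rewrite leqn0 => /eqP/cards0_eq ->; rewrite inE.
case: (set_0Vmem S) => [E | [v0 Hv0]].
  have -> : x = y; last exact: connect0.
  by apply/ffunP => k; apply: Hxy; rewrite E inE.
have [v Hv Hmax] := exists_max Hc Hv0.
pose S' := S :\ v.
have Hd' : forall u w, arcb f u w -> w \in S' -> u \in S'.
  move=> u w Ha; rewrite !inE => /andP [Hwv HwS]; rewrite (Hd _ _ Ha HwS) andbT.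
  apply/eqP => Euv; subst u.
  by move: (Hmax w HwS Hwv); rewrite Ha.
have Hc' : (#|S'| <= m)%N.
  by move: Hcard; rewrite (cardsD1 v S) Hv.
have IH' := IH S' Hc' Hd'.
case: (eqVneq (x v) (y v)) => Exy.
  apply: IH' => k; rewrite !inE negb_and negbK => /orP [/eqP ->//|/Hxy//].
have [z Hz] := switch H2 H3 v (x v).
pose w : config n := [ffun k => if k \in S' then z k else x k].
apply: (@connect_trans _ _ w).
  by apply: IH' => k Hk; rewrite /w ffunE (negbTE Hk).
apply: (@connect_trans _ _ (Fupd f v w)).
  by apply: connect1; apply/existsP; exists v.
apply: IH' => k Hk; rewrite ffunE.
case: eqVneq => [->|ne].
  rewrite Hz.
  - by move: Exy; case: (x v); case: (y v).
  - move=> u Ha Huv; rewrite /w ffunE.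
    by rewrite !inE Huv (Hd _ _ Ha Hv).
  - by rewrite /w ffunE !inE eqxx.
rewrite /w ffunE (negbTE Hk); apply: Hxy.
by move: Hk; rewrite !inE ne.
Qed.

Theorem theorem2 (n : nat) (f : bnet n) :
  (0 < n)%N ->
  (forall r : nat, (2 <= r)%N -> ~ has_circuit_of_length f r) ->
  (forall i : 'I_n, positive_loop f i -> negative_loop f i) ->
  (forall i : 'I_n, exists j : 'I_n, negative_loop f j /\ reachable f j i) ->
  strongly_connected (async_edge f).
Proof.
move=> _ Hc H2 H3 x y.
apply: (main_ind Hc H2 H3 (leqnn #|[set: 'I_n]|)).
- by move=> u v _; rewrite !inE.
- by move=> k; rewrite inE.
Qed.
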